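(* Consider the multi-element (three spatial elements, periodic), single-slab space-time SBP scheme: unknowns $\boldsymbol\rho,\boldsymbol g_1,\dots,\boldsymbol g_{n_v}\in\mathbb R^{3(n_t+1)(n_x+1)}$ satisfying $$\mathsf D_t\boldsymbol\rho+\tilde{\mathsf D}_x\langle v\boldsymbol g\rangle=-\sigma_a\boldsymbol\rho-\mathsf H_t^{-1}\mathsf t_B\mathsf t_B^\top(\boldsymbol\rho-\boldsymbol\rho(0)),$$ $$\mathsf D_t\boldsymbol g_k+\tfrac{v_k}{\varepsilon}\tilde{\mathsf D}_x\boldsymbol g_k-\tfrac1\varepsilon\langle v\tilde{\mathsf D}_x\boldsymbol g\rangle+\tfrac{v_k}{\varepsilon^2}\tilde{\mathsf D}_x\boldsymbol\rho=-\Big(\tfrac{\sigma_s}{\varepsilon^2}+\sigma_a\Big)\boldsymbol g_k-\mathsf H_t^{-1}\mathsf t_B\mathsf t_B^\top(\boldsymbol g_k-\boldsymbol g_k(0)),\quad k=1,\dots,n_v,$$ with initial data satisfying $\langle\boldsymbol g(0)\rangle=0$. Then the scheme is stable: with $M_T=\bar{\boldsymbol t}_T\bar{\boldsymbol t}_T^\top\otimes\mathsf I_3\otimes\bar{\mathsf H}_x$ and $M_B=\bar{\boldsymbol t}_B\bar{\boldsymbol t}_B^\top\otimes\mathsf I_3\otimes\bar{\mathsf H}_x$, every solution satisfies $$\tfrac12\boldsymbol\rho^\top M_T\boldsymbol\rho+\tfrac{\varepsilon^2}2\langle\boldsymbol g^\top M_T\boldsymbol g\rangle\le\tfrac12\boldsymbol\rho(0)^\top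 M_B\boldsymbol\rho(0)+\tfrac{\varepsilon^2}2\langle\boldsymbol g(0)^\top M_B\boldsymbol g(0)\rangle.$$
   Context: SBP operators: $\bar{\mathsf D}=\bar{\mathsf H}^{-1}\bar{\mathsf Q}$ on nodes $x_0<\dots<x_n$ is a degree-$p$ SBP approximation of $d/dx$ if $\bar{\mathsf D}\boldsymbol x^k=k\boldsymbol x^{k-1}$ for $0\le k\le p$, $\bar{\mathsf H}$ is diagonal symmetric positive definite, and $\bar{\mathsf Q}+\bar{\mathsf Q}^\top=\bar{\mathsf E}=\bar{\boldsymbol t}_R\bar{\boldsymbol t}_R^\top-\bar{\boldsymbol t}_L\bar{\boldsymbol t}_L^\top=\mathrm{diag}(-1,0,\dots,0,1)$, $\bar{\boldsymbol t}_L,\bar{\boldsymbol t}_R$ first/last unit vectors. $\bar{\mathsf D}_x=\bar{\mathsf H}_x^{-1}\bar{\mathsf Q}_x$ on $n_x+1$ spatial nodes per element, $\bar{\mathsf S}_x=\bar{\mathsf Q}_x-\frac12\bar{\mathsf E}_x$; $\bar{\mathsf D}_t=\bar{\mathsf H}_t^{-1}\bar{\mathsf Q}_t$ on $n_t+1$ temporal nodes, first/last unit vectors $\bar{\boldsymbol t}_B,\bar{\boldsymbol t}_T$. Global periodic spatial operator over three elements: $\tilde{\bar{\mathsf D}}^G_x=(\mathsf I_3\otimes\bar{\mathsf H}_x^{-1})\tilde{\bar{\mathsf Q}}^G_x$, where $\tilde{\bar{\mathsf Q}}^G_x$ is the $3\times3$ block matrix with diagonal blocks $\bar{\mathsf S}_x$,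 blocks $(1,2),(2,3),(3,1)$ equal to $\frac12\bar{\boldsymbol t}_R\bar{\boldsymbol t}_L^\top$ and blocks $(2,1),(3,2),(1,3)$ equal to $-\frac12\bar{\boldsymbol t}_L\bar{\boldsymbol t}_R^\top$. With identities $\mathsf I_{n_x},\mathsf I_{n_t}$ of sizes $n_x+1,n_t+1$: $\tilde{\mathsf D}_x=\mathsf I_{n_t}\otimes\tilde{\bar{\mathsf D}}^G_x$, $\mathsf D_t=\bar{\mathsf D}_t\otimes\mathsf I_3\otimes\mathsf I_{n_x}$, $\mathsf H_t=\bar{\mathsf H}_t\otimes\mathsf I_3\otimes\mathsf I_{n_x}$, $\mathsf t_B=\bar{\boldsymbol t}_B\otimes\mathsf I_3\otimes\mathsf I_{n_x}$. Velocity nodes $v_k$, weights $\omega_k$, $\sum\omega_k=1$, $\sum\omega_kv_k=0$; $\langle\boldsymbol a\rangle=\sum_k\omega_k\boldsymbol a_k$ (e.g. $\langle\boldsymbol g^\top M\boldsymbol g\rangle=\sum_k\omega_k\boldsymbol g_k^\top M\boldsymbol g_k$). $\varepsilon>0$, $\sigma_s>0$, $\sigma_a\ge0$; $\boldsymbol\rho(0),\boldsymbol g_k(0)$ given initial-data vectors. *)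

(* Defs.v *)
From mathcomp Require Import all_boot all_order all_algebra.
From mathcomp Require Import mxtens.
Set Implicit Arguments. Unset Strict Implicit. Unset Printing Implicit Defensive.
Import Order.TTheory GRing.Theory Num.Theory.
Local Open Scope ring_scope.

Section Defs.
Variable R : realFieldType.

Definition tL (n : nat) : 'cV[R]_n.+1 := delta_mx ord0 0.
Definition tR (n : nat) : 'cV[R]_n.+1 := delta_mx ord_max 0.

Definition Emx (n : nat) : 'M[R]_n.+1 := tR n *m (tR n)^T - tL n *m (tL n)^T.

Definition xpow (n : nat) (x : 'cV[R]_n.+1) (k : nat) : 'cV[R]_n.+1 :=
  \col_i (x i 0 ^+ k).

Definition SBP (n p : nat) (x : 'cV[R]_n.+1) (H Q : 'M[R]_n.+1) : Prop :=
  [/\ (forall i j : 'I_n.+1, (i < j)%N -> x i 0 < x j 0),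
      (forall k, (k <= p)%N -> (invmx H *m Q) *m xpow x k = k%:R *: xpow x k.-1),
      is_diag_mx H /\ (forall i, 0 < H i i) &
      Q + Q^T = Emx n].

Definition Smx (n : nat) (Q : 'M[R]_n.+1) : 'M[R]_n.+1 := Q - 2^-1 *: Emx n.

(* the 3x3 block matrix ~Q^G_x: diagonal blocks S_x, blocks (1,2),(2,3),(3,1)
   equal to 1/2 tR tL^T, blocks (2,1),(3,2),(1,3) equal to -1/2 tL tR^T *)
Definition QGblock (n : nat) (Q : 'M[R]_n.+1) (a b : 'I_3) : 'M[R]_n.+1 :=
  if a == b then Smx Q
  else if (val b == (val a).+1 %% 3)%N then 2^-1 *: (tR n *m (tL n)^T)
  else - 2^-1 *: (tL n *m (tR n)^T).

Definition QGx (n : nat) (Q : 'M[R]_n.+1) : 'M[R]_(3 * n.+1) :=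
  \matrix_(i, j) QGblock Q (mxtens_unindex i).1 (mxtens_unindex j).1
                          (mxtens_unindex i).2 (mxtens_unindex j).2.

Definition DGx (n : nat) (H Q : 'M[R]_n.+1) : 'M[R]_(3 * n.+1) :=
  ((1%:M : 'M[R]_3) *t invmx H) *m QGx Q.

Definition I3x (nx : nat) : 'M[R]_(3 * nx.+1) := (1%:M : 'M[R]_3) *t (1%:M : 'M[R]_nx.+1).

Definition Dxt (nt nx : nat) (Hx Qx : 'M[R]_nx.+1)
  : 'M[R]_(nt.+1 * (3 * nx.+1)) := (1%:M : 'M[R]_nt.+1) *t DGx Hx Qx.
Definition Dtg (nx nt : nat) (Ht Qt : 'M[R]_nt.+1)
  : 'M[R]_(nt.+1 * (3 * nx.+1)) := (invmx Ht *m Qt) *t I3x nx.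
Definition Htg (nx nt : nat) (Ht : 'M[R]_nt.+1)
  : 'M[R]_(nt.+1 * (3 * nx.+1)) := Ht *t I3x nx.
Definition tBg (nx nt : nat) : 'M[R]_(nt.+1 * (3 * nx.+1), 1 * (3 * nx.+1)) := tL nt *t I3x nx.

Definition MT (nt nx : nat) (Hx : 'M[R]_nx.+1) : 'M[R]_(nt.+1 * (3 * nx.+1)) :=
  (tR nt *m (tR nt)^T) *t ((1%:M : 'M[R]_3) *t Hx).
Definition MB (nt nx : nat) (Hx : 'M[R]_nx.+1) : 'M[R]_(nt.+1 * (3 * nx.+1)) :=
  (tL nt *m (tL nt)^T) *t ((1%:M : 'M[R]_3) *t Hx).

Definition avg (nv N : nat) (w : 'I_nv -> R) (a : 'I_nv -> 'cV[R]_N) : 'cV[R]_N :=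
  \sum_(k < nv) w k *: a k.
Definition avgR (nv : nat) (w : 'I_nv -> R) (a : 'I_nv -> R) : R :=
  \sum_(k < nv) w k * a k.

Definition qf (N : nat) (M : 'M[R]_N) (u : 'cV[R]_N) : R := (u^T *m M *m u) 0 0.

End Defs.
Arguments tBg {R} nx nt.

(* Main.v *)
Require Import Defs.
From mathcomp Require Import all_boot all_order all_algebra.
From mathcomp Require Import mxtens ring lra.
Import Order.TTheory GRing.Theory Num.Theory.
Local Open Scope ring_scope.

Section L.
Local Set Implicit Arguments.
Local Unset Strict Implicit.
Variable R : realFieldType.
Definition bf n (M : 'M[R]_n) (u z : 'cV[R]_n) : R := (u^T *m M *m z) 0 0.
Lemma bfDr n (M : 'M[R]_n) u z1 z2 : bf M u (z1 + z2) = bf M u z1 + bf M u z2.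
Proof. by rewrite /bf mulmxDr [in LHS]mxE. Qed.
Lemma bfBr n (M : 'M[R]_n) u z1 z2 : bf M u (z1 - z2) = bf M u z1 - bf M u z2.
Proof. by rewrite /bf mulmxBr [in LHS]mxE [X in _ + X]mxE. Qed.
Lemma bfZr n (M : 'M[R]_n) u a z : bf M u (a *: z) = a * bf M u z.
Proof. by rewrite /bf -scalemxAr [in LHS]mxE. Qed.
Lemma bfNr n (M : 'M[R]_n) u z : bf M u (- z) = - bf M u z.
Proof. by rewrite /bf mulmxN [in LHS]mxE. Qed.
Lemma bf_tr n (M : 'M[R]_n) u z : bf M u z = bf M^T z u.
Proof. rewrite /bf; have -> : (u^T *m M *m z) 0 0 = ((u^T *m M *m z)^T) 0 0 by rewrite [in RHS]mxE.
by rewrite !trmx_mul trmxK mulmxA. Qed.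
Lemma bf_mulr n (M D : 'M[R]_n) u z : bf M u (D *m z) = bf (M *m D) u z.
Proof. by rewrite /bf !mulmxA. Qed.
Lemma bf_sumr n I (r : seq I) (a : I -> R) (M : 'M[R]_n) u (z : I -> 'cV_n) :
  bf M u (\sum_(k <- r) a k *: z k) = \sum_(k <- r) a k * bf M u (z k).
Proof. rewrite /bf mulmx_sumr summxE; apply: eq_bigr => k _; by rewrite -scalemxAr mxE. Qed.
Lemma bf_suml n I (r : seq I) (a : I -> R) (M : 'M[R]_n) u (z : I -> 'cV_n) :
  bf M (\sum_(k <- r) a k *: z k) u = \sum_(k <- r) a k * bf M (z k) u.
Proof. rewrite bf_tr bf_sumr; apply: eq_bigr => k _; by rewrite -bf_tr. Qed.
Definition dnn n (M : 'M[R]_n) := (forall i j, i != j -> M i j = 0) /\ (forall i, 0 <= M i i).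
Definition dpos n (M : 'M[R]_n) := (forall i j, i != j -> M i j = 0) /\ (forall i, 0 < M i i).
Lemma dpos_nn n (M : 'M[R]_n) : dpos M -> dnn M.
Proof. by case=> h1 h2; split=> // i; apply: ltW. Qed.
Lemma tens_dnn m n (A : 'M[R]_m) (B : 'M[R]_n) : dnn A -> dnn B -> dnn (A *t B).
Proof.
move=> [dA pA] [dB pB]; split.
  move=> i j; case: (mxtens_indexP i) => i1 i2; case: (mxtens_indexP j) => j1 j2 ne.
  rewrite tensmxE; have [e1|n1] := eqVneq i1 j1; last by rewrite dA ?mul0r.
  rewrite dB ?mulr0 //; apply: contraNneq ne => e2; by rewrite e1 e2.
by move=> i; case: (mxtens_indexP i) => i1 i2; rewrite tensmxE mulr_ge0.
Qed.
Lemma tens_dpos m n (A : 'M[R]_m) (B : 'M[R]_n) : dpos A -> dpos B -> dpos (A *t B).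
Proof.
move=> [dA pA] [dB pB]; split.
  move=> i j; case: (mxtens_indexP i) => i1 i2; case: (mxtens_indexP j) => j1 j2 ne.
  rewrite tensmxE; have [e1|n1] := eqVneq i1 j1; last by rewrite dA ?mul0r.
  rewrite dB ?mulr0 //; apply: contraNneq ne => e2; by rewrite e1 e2.
by move=> i; case: (mxtens_indexP i) => i1 i2; rewrite tensmxE mulr_gt0.
Qed.
Lemma dpos1 n : dpos (1%:M : 'M[R]_n).
Proof. split=> [i j ne|i]; rewrite !mxE ?(negPf ne) //= eqxx ltr01 //. Qed.
Lemma dnn_sym n (M : 'M[R]_n) : dnn M -> M^T = M.
Proof.
move=> [d _]; apply/matrixP=> i j; rewrite mxE.
have [->|ne] := eqVneq i j; first by [].
by rewrite !d // eq_sym.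
Qed.
Lemma dnn_qf n (M : 'M[R]_n) u : dnn M -> bf M u u = \sum_i M i i * u i 0 ^+ 2.
Proof.
move=> [d _]; rewrite /bf mxE; apply: eq_bigr => j _.
rewrite mxE (bigD1 j) //= big1 ?addr0; last first.
  by move=> i ne; rewrite d ?mulr0.
by rewrite mxE expr2; ring.
Qed.
Lemma dnn_qf_ge0 n (M : 'M[R]_n) u : dnn M -> 0 <= bf M u u.
Proof.
move=> h; rewrite dnn_qf //; apply: sumr_ge0 => i _.
by rewrite mulr_ge0 ?sqr_ge0 //; case: h => _ ->.
Qed.
Lemma dpos_qf0 n (M : 'M[R]_n) u : dpos M -> bf M u u = 0 -> u = 0.
Proof.
move=> h; rewrite dnn_qf; last exact: dpos_nn.
move=> /eqP; rewrite psumr_eq0; last first.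
  by move=> i _; rewrite mulr_ge0 ?sqr_ge0 // ltW //; case: h => _ ->.
move=> /allP H; apply/matrixP=> i j; rewrite (ord1 j) mxE.
have := H i (mem_index_enum _); rewrite mulf_eq0 sqrf_eq0 => /orP[|/eqP //].
by case: h => _ /(_ i) /gt_eqF ->.
Qed.
Lemma dpos_unit n (M : 'M[R]_n) : dpos M -> M \in unitmx.
Proof.
move=> [d p].
have -> : M = diag_mx (\row_i M i i).
  apply/matrixP=> i j; rewrite !mxE; have [->|ne] := eqVneq i j; first by rewrite mulr1n.
  by rewrite d // mulr0n.
rewrite unitmxE det_diag unitfE; apply/prodf_neq0 => i _; rewrite mxE.
exact: lt0r_neq0.
Qed.
Lemma bfBl n (M : 'M[R]_n) u1 u2 z : bf M (u1 - u2) z = bf M u1 z - bf M u2 z.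
Proof. by rewrite bf_tr bfBr -!bf_tr. Qed.
Lemma bf_cross n (M : 'M[R]_n) u z : dnn M -> bf M u z <= 2^-1 * (bf M u u + bf M z z).
Proof.
move=> h; have := dnn_qf_ge0 (u - z) h.
rewrite !bfBl !bfBr.
have -> : bf M z u = bf M u z by rewrite bf_tr dnn_sym.
move=> H; nra.
Qed.
Lemma tens11 m n : (1%:M : 'M[R]_m) *t (1%:M : 'M[R]_n) = 1%:M.
Proof.
apply/matrixP=> i j; case: (mxtens_indexP i) => i1 i2; case: (mxtens_indexP j) => j1 j2.
rewrite tensmxE !mxE (inj_eq (can_inj (@mxtens_indexK _ _))) xpair_eqE.
by case: (i1 == j1); case: (i2 == j2); rewrite /= ?mulr1 ?mulr0.
Qed.
Lemma tensmxDl m n p q (A B : 'M[R]_(m,n)) (C : 'M[R]_(p,q)) : (A + B) *t C = A *t C + B *t C.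
Proof. by apply/matrixP=> i j; rewrite !mxE mulrDl. Qed.
Lemma tensmxBl m n p q (A B : 'M[R]_(m,n)) (C : 'M[R]_(p,q)) : (A - B) *t C = A *t C - B *t C.
Proof. by apply/matrixP=> i j; rewrite !mxE mulrBl. Qed.
Lemma tensmxNr m n p q (A : 'M[R]_(m,n)) (C : 'M[R]_(p,q)) : A *t (- C) = - (A *t C).
Proof. by apply/matrixP=> i j; rewrite !mxE mulrN. Qed.
Lemma dnn_delta n (i0 : 'I_n) : dnn (delta_mx i0 i0 : 'M[R]_n).
Proof.
split=> [i j ne|i]; rewrite mxE; last by case: (_ && _).
have [ei|] := eqVneq i i0; have [ej|] := eqVneq j i0; rewrite /= ?andbF ?andFb //.
by move: ne; rewrite ei ej eqxx.
Qed.
Lemma tLL n : tL R n *m (tL R n)^T = delta_mx ord0 ord0.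
Proof. by rewrite /tL trmx_delta mul_delta_mx. Qed.
Lemma tRR n : tR R n *m (tR R n)^T = delta_mx ord_max ord_max.
Proof. by rewrite /tR trmx_delta mul_delta_mx. Qed.
Lemma Emx_sym n : (Emx R n)^T = Emx R n.
Proof. by rewrite /Emx linearB /= !trmx_mul !trmxK. Qed.
Lemma QGblock_skew n (Q : 'M[R]_n.+1) a b : Q + Q^T = Emx R n ->
  QGblock Q b a = - (QGblock Q a b)^T.
Proof.
move=> hQ; rewrite /QGblock.
have [e|ne] := eqVneq a b.
  rewrite /Smx; apply/matrixP=> i j.
  have := congr1 (fun M : 'M[R]_n.+1 => M j i) hQ; have := Emx_sym n.
  move=> /(congr1 (fun M : 'M[R]_n.+1 => M i j)); rewrite !mxE => -> h.
  lra.
case: a ne => [[|[|[|a]]] Ha] //; case: b => [[|[|[|b]]] Hb] //= _;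
  by rewrite linearZ /= trmx_mul trmxK ?scaleNr ?opprK.
Qed.
Lemma QGx_skew n (Q : 'M[R]_n.+1) : Q + Q^T = Emx R n -> (QGx Q)^T = - QGx Q.
Proof.
move=> hQ; apply/matrixP=> i j; rewrite !mxE (QGblock_skew _ _ hQ).
by rewrite [in LHS]mxE [in LHS]mxE.
Qed.
Lemma bf_addM n (M N : 'M[R]_n) u z : bf (M + N) u z = bf M u z + bf N u z.
Proof. by rewrite /bf mulmxDr mulmxDl [in LHS]mxE. Qed.
Lemma bf_subM n (M N : 'M[R]_n) u z : bf (M - N) u z = bf M u z - bf N u z.
Proof. by rewrite /bf mulmxBr mulmxBl [in LHS]mxE [X in _ + X]mxE. Qed.
Lemma bf_oppM n (M : 'M[R]_n) u z : bf (- M) u z = - bf M u z.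
Proof. by rewrite /bf mulmxN mulNmx [in LHS]mxE. Qed.
Lemma bf0r n (M : 'M[R]_n) u : bf M u 0 = 0.
Proof. by rewrite /bf mulmx0 mxE. Qed.
Lemma bf0l n (M : 'M[R]_n) u : bf M 0 u = 0.
Proof. by rewrite bf_tr bf0r. Qed.
Lemma aux (L1 L2 X : R) : L1 = L2 -> X = L1 - L2 -> X = 0.
Proof. by move=> -> ->; rewrite subrr. Qed.
Lemma bfZl n (M : 'M[R]_n) a u z : bf M (a *: u) z = a * bf M u z.
Proof. by rewrite bf_tr bfZr -bf_tr. Qed.
End L.
Theorem theorem3p8 (R : realFieldType) (nx nt px pt nv : nat)
    (xnodes : 'cV[R]_nx.+1) (Hx Qx : 'M[R]_nx.+1)
    (tnodes : 'cV[R]_nt.+1) (Ht Qt : 'M[R]_nt.+1)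
    (v w : 'I_nv -> R) (eps sigma_s sigma_a : R)
    (rho0 rho : 'cV[R]_(nt.+1 * (3 * nx.+1)))
    (g0 g : 'I_nv -> 'cV[R]_(nt.+1 * (3 * nx.+1))) :
  SBP px xnodes Hx Qx ->
  SBP pt tnodes Ht Qt ->
  (forall k, 0 < w k) ->
  \sum_(k < nv) w k = 1 ->
  \sum_(k < nv) w k * v k = 0 ->
  0 < eps -> 0 < sigma_s -> 0 <= sigma_a ->
  avg w g0 = 0 ->
  Dtg nx Ht Qt *m rho + Dxt nt Hx Qx *m avg w (fun k => v k *: g k)
    = - sigma_a *: rho
      - invmx (Htg nx Ht) *m (tBg nx nt *m (tBg nx nt)^T) *m (rho - rho0) ->
  (forall k : 'I_nv,
     Dtg nx Ht Qt *m g k + (v k / eps) *: (Dxt nt Hx Qx *m g k)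
       - eps^-1 *: avg w (fun j => v j *: (Dxt nt Hx Qx *m g j))
       + (v k / eps ^+ 2) *: (Dxt nt Hx Qx *m rho)
     = - (sigma_s / eps ^+ 2 + sigma_a) *: g k
       - invmx (Htg nx Ht) *m (tBg nx nt *m (tBg nx nt)^T) *m (g k - g0 k)) ->
  2^-1 * qf (MT nt Hx) rho + eps ^+ 2 / 2 * avgR w (fun k => qf (MT nt Hx) (g k))
    <= 2^-1 * qf (MB nt Hx) rho0 + eps ^+ 2 / 2 * avgR w (fun k => qf (MB nt Hx) (g0 k)).
Proof.
move=> [_ _ [hxd hxp] hQx] [_ _ [htd htp] hQt] wpos wsum wvsum epos sspos sapos g0avg Erho Eg.
have HxD : dpos Hx.
  split=> // i j ne; move/is_diag_mxP: hxd; apply; by rewrite val_eqE.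
have HtD : dpos Ht.
  split=> // i j ne; move/is_diag_mxP: htd; apply; by rewrite val_eqE.
have HxU := dpos_unit HxD; have HtU := dpos_unit HtD.
set Hb := (1%:M : 'M[R]_3) *t Hx.
have HbD : dpos Hb by apply: tens_dpos => //; apply: dpos1.
set W := Ht *t Hb.
have WD : dpos W by apply: tens_dpos.
have F1 : W *m Dtg nx Ht Qt = Qt *t Hb.
  by rewrite /W /Dtg /I3x tens11 tensmx_mul mulmx1 mulmxA mulmxV // mul1mx.
have F2 : W *m Dxt nt Hx Qx = Ht *t QGx Qx.
  by rewrite /W /Dxt /DGx tensmx_mul mulmx1 mulmxA /Hb tensmx_mul mulmx1 mulmxV // tens11 mul1mx.
have F3 : W *m invmx (Htg nx Ht) *m (tBg nx nt *m (tBg nx nt)^T) = MB nt Hx.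
  have eW : W = (1%:M *t Hb) *m Htg nx Ht by rewrite /Htg /I3x tens11 tensmx_mul mul1mx mulmx1.
  have HgU : Htg nx Ht \in unitmx.
    by rewrite /Htg /I3x tens11; apply: dpos_unit; apply: tens_dpos => //; apply: dpos1.
  rewrite eW mulmxK // /tBg /I3x tens11 trmx_tens trmx1 tensmx_mul mul1mx tensmx_mul mul1mx mulmx1.
  by [].
have Skew : (Ht *t QGx Qx)^T = - (Ht *t QGx Qx).
  by rewrite trmx_tens (dnn_sym (dpos_nn HtD)) QGx_skew // tensmxNr.
have F4 : (Qt *t Hb) + (Qt *t Hb)^T = MT nt Hx - MB nt Hx.
  by rewrite trmx_tens (dnn_sym (dpos_nn HbD)) -tensmxDl hQt /Emx tensmxBl.
have MBnn : dnn (MB nt Hx).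
  by rewrite /MB tLL; apply: tens_dnn; [apply: dnn_delta | apply: dpos_nn].
have MTnn : dnn (MT nt Hx).
  by rewrite /MT tRR; apply: tens_dnn; [apply: dnn_delta | apply: dpos_nn].
set A := Ht *t QGx Qx.
set WDt := Qt *t Hb.
set MBm := MB nt Hx. set MTm := MT nt Hx.

set P := invmx (Htg nx Ht) *m (tBg nx nt *m (tBg nx nt)^T).
have FP : W *m P = MBm by rewrite /P mulmxA.
have halfE : forall u, bf WDt u u = 2^-1 * (bf MTm u u - bf MBm u u).
  move=> u; have := congr1 (fun M => bf M u u) F4; rewrite /= bf_addM (bf_addM (Qt *t Hb)) bf_oppM -bf_tr.
  move=> h; rewrite -h; lra.
have skewA : forall u z, bf A u z = - bf A z u.
  by move=> u z; rewrite bf_tr Skew bf_oppM.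
have skew0 : forall u, bf A u u = 0.
  by move=> u; have := skewA u u; lra.
set V := avg w (fun k => v k *: g k).
set G := avg w g.
have avgDx : avg w (fun j => v j *: (Dxt nt Hx Qx *m g j)) = Dxt nt Hx Qx *m V.
  rewrite /V /avg mulmx_sumr; apply: eq_bigr => k _; by rewrite -!scalemxAr.
set c := sigma_s / eps ^+ 2 + sigma_a.
have cpos : 0 < c by rewrite /c ltr_wpDr // divr_gt0 // exprn_gt0.
have R1 : bf WDt rho rho + bf A rho V
          = - sigma_a * bf W rho rho - (bf MBm rho rho - bf MBm rho rho0).
  have := congr1 (bf W rho) Erho.
  by rewrite bfDr bfBr bfZr !bf_mulr F1 F2 FP bfBr.
have Rk : forall u k, bf WDt u (g k) + (v k / eps) * bf A u (g k) - eps^-1 * bf A u V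
     + (v k / eps ^+ 2) * bf A u rho + c * bf W u (g k) + bf MBm u (g k) - bf MBm u (g0 k) = 0.
  move=> u k; have := congr1 (bf W u) (Eg k).
  rewrite avgDx !(bfDr, bfBr, bfZr, bfNr) !bf_mulr F1 F2 FP => h.
  apply: (aux h); rewrite /A /WDt /c (bfBr MBm u (g k)); ring.
have sumL : forall (M : 'M[R]_(nt.+1 * (3 * nx.+1))) (a : 'I_nv -> R) (x : 'I_nv -> 'cV_(nt.+1 * (3 * nx.+1))) z,
   \sum_k w k * (a k * bf M (x k) z) = bf M (avg w (fun k => a k *: x k)) z.
  by move=> M a x z; rewrite /avg bf_suml; apply: eq_bigr => k _; rewrite bfZl.
have sumR : forall (M : 'M[R]_(nt.+1 * (3 * nx.+1))) (a : 'I_nv -> R) (x : 'I_nv -> 'cV_(nt.+1 * (3 * nx.+1))) z,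
   \sum_k w k * (a k * bf M z (x k)) = bf M z (avg w (fun k => a k *: x k)).
  by move=> M a x z; rewrite /avg bf_sumr; apply: eq_bigr => k _; rewrite bfZr.
have scal1 : forall (x : 'I_nv -> 'cV_(nt.+1 * (3 * nx.+1))), avg w (fun k => 1 *: x k) = avg w x.
  by move=> x; rewrite /avg; apply: eq_bigr => k _; rewrite scale1r.
have G0 : G = 0.
  have S0 : \sum_k w k * (bf WDt G (g k) + (v k / eps) * bf A G (g k) - eps^-1 * bf A G V
     + (v k / eps ^+ 2) * bf A G rho + c * bf W G (g k) + bf MBm G (g k) - bf MBm G (g0 k)) = 0.
    by apply: big1 => k _; rewrite Rk mulr0.
  have S1 : \sum_k w k * (bf WDt G (g k) + (v k / eps) * bf A G (g k) - eps^-1 * bf A G V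
     + (v k / eps ^+ 2) * bf A G rho + c * bf W G (g k) + bf MBm G (g k) - bf MBm G (g0 k))
     = \sum_k w k * (1 * bf WDt G (g k)) + eps^-1 * \sum_k w k * (v k * bf A G (g k))
       - eps^-1 * bf A G V * \sum_k w k + (\sum_k w k * v k) / eps ^+ 2 * bf A G rho
       + c * \sum_k w k * (1 * bf W G (g k)) + \sum_k w k * (1 * bf MBm G (g k))
       - \sum_k w k * (1 * bf MBm G (g0 k)).
    rewrite !mulr_sumr !mulr_suml.
    do ![rewrite -big_split /= | rewrite -sumrB /=].
    by apply: eq_bigr => k _; ring.
  move: S1; rewrite S0 !sumR !scal1 -/G -/V g0avg wsum wvsum bf0r halfE => S1.
  have q1 := dnn_qf_ge0 G MTnn; have q2 := dnn_qf_ge0 G MBnn.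
  have q3 := dnn_qf_ge0 G (dpos_nn WD).
  have cq : c * bf W G G = 0.
    apply/eqP; rewrite eq_le; apply/andP; split; last by rewrite mulr_ge0 // ltW.
    have : 0 <= c * bf W G G by rewrite mulr_ge0 // ltW.
    lra.
  apply: (dpos_qf0 WD); move/eqP: cq; rewrite mulf_eq0 (gt_eqF cpos) /=; by move/eqP.
have Irho : 2^-1 * bf MTm rho rho <= 2^-1 * bf MBm rho0 rho0 - bf A rho V.
  move: R1; rewrite halfE => R1.
  have := bf_cross rho rho0 MBnn.
  have : 0 <= sigma_a * bf W rho rho by rewrite mulr_ge0 // (dnn_qf_ge0 _ (dpos_nn WD)).
  lra.
have Ik : forall k, w k * (2^-1 * bf MTm (g k) (g k)) <=
    w k * (2^-1 * bf MBm (g0 k) (g0 k)) + eps^-1 * (w k * (1 * bf A (g k) V))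
     - (eps ^+ 2)^-1 * (w k * (v k * bf A (g k) rho)).
  move=> k; have := Rk (g k) k; rewrite halfE skew0.
  have := bf_cross (g k) (g0 k) MBnn.
  have : 0 <= c * bf W (g k) (g k) by apply: mulr_ge0; [apply: ltW | apply: dnn_qf_ge0; apply: dpos_nn].
  have wk := wpos k.
  move=> h1 h2 h3.
  have e : v k / eps ^+ 2 * bf A (g k) rho = (eps ^+ 2)^-1 * (v k * bf A (g k) rho) by ring.
  rewrite e in h3.
  set X := bf A (g k) V in h3 *; set Y := v k * bf A (g k) rho in h3 e *.
  nra.
have Is : 2^-1 * \sum_k w k * bf MTm (g k) (g k)
    <= 2^-1 * \sum_k w k * bf MBm (g0 k) (g0 k) + (eps ^+ 2)^-1 * bf A rho V.
  have -> : 2^-1 * \sum_k w k * bf MTm (g k) (g k) = \sum_k w k * (2^-1 * bf MTm (g k) (g k)).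
    by rewrite mulr_sumr; apply: eq_bigr => k _; ring.
  apply: le_trans; first by apply: ler_sum => k _; exact: Ik.
  rewrite sumrB big_split /= -!mulr_sumr sumL sumL scal1 -/G -/V G0 bf0l skewA.
  have -> : \sum_k w k * (2^-1 * bf MBm (g0 k) (g0 k)) = 2^-1 * \sum_k w k * bf MBm (g0 k) (g0 k).
    by rewrite mulr_sumr; apply: eq_bigr => k _; ring.
  lra.
have qfE : forall N (M : 'M[R]_N) u, qf M u = bf M u u by [].
rewrite !qfE /avgR -/MTm -/MBm.
set a := \sum_k w k * bf MTm (g k) (g k) in Is *.
set b := \sum_k w k * bf MBm (g0 k) (g0 k) in Is *.
have e2 : 0 < eps ^+ 2 by rewrite exprn_gt0.
have H := ler_wpM2l (ltW e2) Is.
have E : eps ^+ 2 * (2^-1 * b + (eps ^+ 2)^-1 * bf A rho V) = eps ^+ 2 * (2^-1 * b) + bf A rho V.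
  by field; rewrite gt_eqF.
rewrite E in H.
have -> : eps ^+ 2 / 2 * a = eps ^+ 2 * (2^-1 * a) by ring.
have -> : eps ^+ 2 / 2 * b = eps ^+ 2 * (2^-1 * b) by ring.
lra.
Qed.
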